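(* In the setup below, let $H\le\mathrm{SL}(P/Z)$, let $\varphi:H\to P$ be a map with $\varphi(hk)=\varphi(h)\,{}^h\varphi(k)$ for all $h,k\in H$, and let $S=\{\varphi(h)h : h\in H\}\le G$. Then $$N_P(S)=C_P(S)\le C_P(H)=N_P(H).$$
   Context: Setup: $p$ is an odd prime, $E$ is an extraspecial group of order $p^3$ and exponent $p$, $i\ge1$, and $P=E\circ C_{p^i}$ is the central product amalgamating $Z(E)$ with the subgroup of order $p$ of $C_{p^i}$; $Z:=Z(P)=C_{p^i}$. $\mathrm{SL}(P/Z)\cong\mathrm{SL}_2(\mathbb F_p)$ acts on $P$ by automorphisms fixing $Z$ pointwise and inducing the natural action on $P/Z\cong\mathbb F_p^2$ (with respect to a basis $\bar f_1,\bar f_2$, $f_1,f_2\in E$, the generators acting by $\begin{pmatrix}1&1\\0&1\end{pmatrix}: f_1\mapsto f_1, f_2\mapsto f_1f_2$ and $\begin{pmatrix}1&0\\1&1\end{pmatrix}: f_1\mapsto f_1f_2, f_2\mapsto f_2$). $G:=P\rtimes\mathrm{SL}(P/Z)$; ${}^gy=gyg^{-1}$. *)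

(* Defs.v *)
From mathcomp Require Import all_boot all_fingroup all_solvable.

(* Main.v *)
Require Import Defs.
From mathcomp Require Import all_boot all_fingroup all_solvable.

Set Implicit Arguments.
Unset Strict Implicit.
Unset Printing Implicit Defensive.
Local Open Scope group_scope.

Ltac cstep := match goal with
 | |- context [conjg (?x * ?y)%g ?z] => rewrite (conjMg x y z)
 | |- context [conjg (?x^-1)%g ?z] => rewrite (conjVg x z)
 end.
Theorem mainTheorem14 (gT : finGroupType) (p i : nat)
    (E C P L G H : {group gT}) (f1 f2 u l : gT) (phi : gT -> gT) :
  prime p -> odd p -> (0 < i)%N ->
  extraspecial E -> #|E| = (p ^ 3)%N -> exponent E = p ->
  cyclic C -> #|C| = (p ^ i)%N -> E \* C = P -> E :&: C = 'Z(E) ->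
  f1 \in E -> f2 \in E -> E = <<[set f1; f2]>> ->
  P ><| L = G -> 'C_L(P) = 1 -> L \subset 'C(C) ->
  u \in L -> l \in L -> L = <<[set u; l]>> ->
  f1 ^ u^-1 = f1 -> f2 ^ u^-1 = f1 * f2 ->
  f1 ^ l^-1 = f1 * f2 -> f2 ^ l^-1 = f2 ->
  H \subset L ->
  {in H, forall h, phi h \in P} ->
  {in H &, forall h k, phi (h * k) = phi h * (phi k ^ h^-1)} ->
  let S := [set phi h * h | h in H] in
  'N_P(S) = 'C_P(S) /\ 'C_P(S) \subset 'C_P(H) /\ 'C_P(H) = 'N_P(H).
Proof.
move=> pr_p odd_p _ esE _ expE cycC _ defP tiEC f1E f2E defE defG trCL cCL
  uL lL defL u1 u2 l1 l2 sHL phiP _ S.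
case/cprodP: defP => _ defEC cEC.
case/sdprodP: defG => _ defPL nPL tiPL.
have [[_ derE] _] := esE.
have sZC : 'Z(E) \subset C by rewrite -tiEC subsetIr.
have sEP : E \subset P by rewrite -defEC mulG_subl.
have sCP : C \subset P by rewrite -defEC mulG_subr.
have l2' : f2 ^ l = f2 by rewrite -{1}l2 conjgKV.
have l1' : f1 ^ l = f1 * f2^-1.
  have := congr1 (conjg^~ l) l1; rewrite /= conjgKV conjMg l2' => e.
  by rewrite {2}e mulgK.
have faith : forall g1 g2, g1 \in L -> g2 \in L ->
    f1 ^ g1 = f1 ^ g2 -> f2 ^ g1 = f2 ^ g2 -> g1 = g2.
  move=> g1 g2 Lg1 Lg2 e1 e2.
  have Lk : g1 * g2^-1 \in L by rewrite groupM ?groupV.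
  have kE : g1 * g2^-1 \in 'C(E).
    rewrite defE cent_gen; apply/centP => f; rewrite !inE => /orP[]/eqP->.
      by apply/commute_sym/commgP/conjg_fixP; rewrite conjgM e1 conjgK.
    by apply/commute_sym/commgP/conjg_fixP; rewrite conjgM e2 conjgK.
  have kC : g1 * g2^-1 \in 'C(C) by apply: (subsetP cCL).
  have : g1 * g2^-1 \in 'C_L(P) by rewrite inE Lk -defEC centM inE kE kC.
  by rewrite trCL => /set1P k1; apply/eqP; rewrite eq_mulgV1 k1.
pose T := (u^-1 * l * u^-1) ^+ 2.
have fT1 : f1 ^ T = f1 * f2^-1 * f1^-1 * f2 * f1^-1.
  rewrite /T expgS expg1 !conjgM.
  repeat (rewrite ?u1 ?u2 ?l1' ?l2'; cstep). rewrite ?u1 ?u2 ?l1' ?l2'.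
  by rewrite !gnorm.
have fT2 : f2 ^ T = f1 * f2^-1 * f1^-1.
  rewrite /T expgS expg1 !conjgM.
  repeat (rewrite ?u1 ?u2 ?l1' ?l2'; cstep). rewrite ?u1 ?u2 ?l1' ?l2'.
  by rewrite !gnorm.
have TL : T \in L by rewrite /T groupX // !groupM ?groupV.
have Tu : T * u^-1 = u^-1 * T.
  apply: faith; rewrite ?groupM ?groupV // !conjgM;
  repeat (rewrite ?u1 ?u2 ?l1' ?l2' ?fT1 ?fT2; cstep);
  rewrite ?u1 ?u2 ?l1' ?l2' ?fT1 ?fT2; by rewrite !gnorm.
have Tl : T * l = l * T.
  apply: faith; rewrite ?groupM ?groupV // !conjgM;
  repeat (rewrite ?u1 ?u2 ?l1' ?l2' ?fT1 ?fT2; cstep);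
  rewrite ?u1 ?u2 ?l1' ?l2' ?fT1 ?fT2; by rewrite !gnorm.
have TC : T \in 'C(L).
  rewrite defL cent_gen; apply/centP => g; rewrite !inE => /orP[]/eqP->.
    by rewrite -[u]invgK; apply: commuteV.
  exact: Tl.
have cZ : forall y x, y \in 'Z(E) -> x \in E -> commute x y.
  by move=> y x /setIP[_ /centP cy] xE; apply/commute_sym/cy.
have nZE : E \subset 'N('Z(E)) := normal_norm (center_normal E).
have sZE : 'Z(E) \subset E := center_sub E.
have derZ : forall x y, x \in E -> y \in E -> [~ x, y] \in 'Z(E).
  by move=> x y xE yE; rewrite -derE mem_commg.
have Z1 : f1 * f1 ^ T \in 'Z(E).
  have -> : f1 * f1 ^ T = [~ f1^-1, f2] ^ f1^-1.
    by rewrite fT1 commgEl !conjgE !gnorm.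
  by rewrite memJ_norm ?(subsetP nZE) ?groupV // derZ ?groupV.
have Z2 : f2 * f2 ^ T \in 'Z(E).
  have -> : f2 * f2 ^ T = [~ f2^-1, f1^-1].
    by rewrite fT2 commgEl !conjgE !gnorm.
  by rewrite derZ ?groupV.
pose QS := [set a in E | a * a ^ T \in 'Z(E)].
have TE : forall a, a \in E -> a * a ^ T \in 'Z(E) -> a ^ T \in E.
  move=> a aE aZ; rewrite -(mulKg a (a ^ T)) groupM ?groupV //.
  exact: (subsetP sZE).
have gQ : group_set QS.
  apply/group_setP; split; first by rewrite inE group1 conj1g mulg1 group1.
  move=> a b /setIdP[aE aZ] /setIdP[bE bZ].
  apply/setIdP; split; first exact: groupM.
  have -> : a * b * (a * b) ^ T = (a * a ^ T) * [~ a ^ T, b^-1] * (b * b ^ T).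
    by rewrite conjMg commgEl !conjgE !gnorm.
  by apply: groupM => //; apply: groupM => //; apply: derZ; rewrite ?groupV ?TE.
have invT : forall a, a \in E -> a * a ^ T \in 'Z(E).
  move=> a aE.
  have sEQ : E \subset QS.
    apply: (@subset_trans _ _ <<[set f1; f2]>>); first by rewrite defE.
    rewrite -(gen_set_id gQ); apply: genS.
    apply/subsetP => f /set2P[]->; apply/setIdP; split => //.
  by have /setIdP[] := subsetP sEQ a aE.
have zp : forall y, y \in 'Z(E) -> y ^+ p = 1.
  by move=> y yZ; rewrite -expE expg_exponent // (subsetP sZE).
have pE : p = (2 * p./2).+1.
  by rewrite mul2n -{1}(odd_double_half p) odd_p.
have fixL : forall g y, g \in L -> y \in 'Z(E) -> y ^ g = y.
  move=> g y gL yZ; have yC := subsetP sZC y yZ; have gC := subsetP cCL g gL.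
  apply/conjg_fixP/commgP; apply: commute_sym; exact: (centP gC).
have key : forall g e, g \in L -> e \in E -> e^-1 * e ^ g \in 'Z(E) -> e ^ g = e.
  move=> g e gL eE zZ.
  set z := e^-1 * e ^ g in zZ.
  have eg : e ^ g = e * z by rewrite /z mulKVg.
  have z1Z := invT e eE.
  set z1 := e * e ^ T in z1Z.
  pose c := z1 ^+ p./2.
  have cZ' : c \in 'Z(E) by rewrite groupX.
  have cE : c \in E := subsetP sZE c cZ'.
  pose s := e * c.
  have sE : s \in E by rewrite groupM.
  have s1 : s * s ^ T = 1.
    rewrite /s conjMg (fixL T c TL cZ').
    have ceT : commute (e ^ T) c := cZ c _ cZ' (TE e eE z1Z).
    rewrite mulgA -(mulgA e c) -ceT mulgA -/z1 -mulgA -expg2 -expgM -expgS.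
    by rewrite mulnC -pE zp.
  have sT : s ^ T = s^-1 by rewrite -[s ^ T]mul1g -(mulVg s) -mulgA s1 mulg1.
  have s2 : s ^ g * (s ^ g) ^ T = 1.
    by rewrite -conjgM -(centP TC g gL) conjgM -conjMg s1 conj1g.
  have sg : s ^ g = s * z.
    by rewrite /s conjMg eg (fixL g c gL cZ') -(mulgA e z c) -(mulgA e c z) (cZ z c zZ cE).
  have zz : z ^+ 2 = 1.
    by rewrite expg2 -s2 sg conjMg (fixL T z TL zZ) sT (cZ z s zZ sE) -(mulgA z s) mulKVg.
  have := zp z zZ; rewrite pE expgS expgM zz expg1n mulg1 => z1'.
  by rewrite eg z1' mulg1.
have dec : forall a b g1 g2, a \in P -> b \in P -> g1 \in L -> g2 \in L ->
    a * g1 = b * g2 -> g1 = g2.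
  move=> a b g1 g2 aP bP g1L g2L e.
  have : g2 * g1^-1 \in P :&: L.
    apply/setIP; split; last by rewrite groupM ?groupV.
    have -> : g2 * g1^-1 = b^-1 * a by rewrite -(mulgK g1 a) e -(mulgA b) mulKg.
    by rewrite groupM ?groupV.
  by rewrite tiPL => /set1P/eqP; rewrite -eq_mulgV1 => /eqP->.
have xhP : forall x h, x \in P -> h \in H -> x ^ h^-1 \in P.
  by move=> x h Px Hh; rewrite memJ_norm // (subsetP nPL) ?groupV ?(subsetP sHL).
have fixLC : forall g y, g \in L -> y \in C -> y ^ g = y.
  move=> g y gL yC; have gC := subsetP cCL g gL.
  apply/conjg_fixP/commgP; apply: commute_sym; exact: (centP gC).
have fixC : forall y g, y \in C -> g \in E -> y ^ g = y.
  move=> y g yC gE; apply/conjg_fixP/commgP; exact: (centP (subsetP cEC y yC)).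
have fixE : forall y g, y \in E -> g \in C -> y ^ g = y.
  move=> y g yE gC; apply/conjg_fixP/commgP/commute_sym.
  exact: (centP (subsetP cEC g gC)).
have cAC : abelian C := cyclic_abelian cycC.
split.
  apply/eqP; rewrite eqEsubset; apply/andP; split; last exact: setIS _ (cent_sub _).
  apply/subsetP => x /setIP[Px nSx]; rewrite inE Px.
  apply/centP => _ /imsetP[h Hh ->].
  have hL := subsetP sHL h Hh.
  have : (phi h * h) ^ x \in S by rewrite memJ_norm //; apply/imsetP; exists h.
  case/imsetP => k Hk ek.
  have kL := subsetP sHL k Hk.
  have dx : (phi h * h) ^ x = (x^-1 * phi h * x ^ h^-1) * h.
    by rewrite !conjgE !gnorm.
  have hk : h = k.
    apply: (dec (x^-1 * phi h * x ^ h^-1) _ h k _ (phiP k Hk) hL kL); last by rewrite -dx -ek.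
    apply: groupM; [apply: groupM; [by rewrite groupV | exact: phiP] | exact: xhP].
  by apply/commute_sym/commgP/conjg_fixP; rewrite ek -hk.
split.
  apply/subsetP => x /setIP[Px cSx]; rewrite inE Px; apply/centP => h Hh.
  have hL := subsetP sHL h Hh.
  have sS : phi h * h \in S by apply/imsetP; exists h.
  have e1 : x ^ phi h = x ^ h^-1.
    have : x ^ (phi h * h) = x by apply/conjg_fixP/commgP; exact: (centP cSx).
    by rewrite conjgM => e; rewrite -{2}e conjgK.
  have := Px; rewrite -defEC => /mulsgP[e c eE cC dx].
  have := phiP h Hh; rewrite -defEC => /mulsgP[e' c' eE' cC' dy].
  have hL' : h^-1 \in L by rewrite groupV.
  have cc' : c ^ c' = c.
    by apply/conjg_fixP/commgP; exact: (centP (subsetP cAC c cC)).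
  move: e1; rewrite dx dy !conjMg !conjgM (fixC c e' cC eE') cc' (fixLC _ c hL' cC).
  rewrite (fixE (e ^ e') c' _ cC') ?groupJ // => /mulIg eq.
  have ehe : e ^ h^-1 = e by apply: key => //; rewrite -eq -commgEl derZ.
  rewrite -[h]invgK; apply: commuteV; apply/commgP/conjg_fixP.
  by rewrite conjMg ehe (fixLC _ c hL' cC).
apply/eqP; rewrite eqEsubset; apply/andP; split; first exact: setIS _ (cent_sub _).
apply/subsetP => x /setIP[Px nHx]; rewrite inE Px; apply/centP => h Hh.
have hL := subsetP sHL h Hh.
have Hhx : h ^ x \in H by rewrite memJ_norm.
have dx : 1 * h ^ x = (x^-1 * x ^ h^-1) * h by rewrite !conjgE !gnorm.
have := dec _ _ _ _ (group1 P) _ (subsetP sHL _ Hhx) hL dx.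
rewrite groupM ?groupV ?xhP // => /(_ isT) hx.
by apply/commute_sym/commgP/conjg_fixP.
Qed.
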